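(* Let $(X,S_b)$ be an $S_b$-metric space with $b\geq 1$, let $x_0\in X$, and let $f:X\to X$ be a self-mapping for which there exist $\alpha\in(0,1)$ and a non-decreasing function $\varphi:(0,\infty)\to(1,\infty)$ such that for all $x\in X$, $$S_b(x,x,fx)>0 \implies \varphi\big(S_b(x,x,fx)\big)\leq \big[\varphi\big(S_b(x,x,x_0)\big)\big]^{\alpha}$$ (i.e. $f$ is a Jleli-Samet type $D_{x_0}$-$S_b$-contraction). Let $$r=\inf\{S_b(x,x,fx): x\neq fx,\ x\in X\}.$$ Then $f$ fixes the disc $D^{S_b}_{x_0,r}=\{x\in X: S_b(x,x,x_0)\leq r\}$, i.e. $fx=x$ for every $x\in D^{S_b}_{x_0,r}$.
   Context: An $S_b$-metric space $(X,S_b)$ with constant $b\geq 1$ is a nonempty set $X$ with a function $S_b:X\times X\times X\to[0,\infty)$ such that for all $x,y,z,a\in X$: (1) $S_b(x,y,z)=0$ if and only if $x=y=z$; (2) $S_b(x,y,z)\leq b[S_b(x,x,a)+S_b(y,y,a)+S_b(z,z,a)]$. A mapping $f$ fixes a set $\mathcal{F}\subseteq X$ if $\mathcal{F}$ is contained in the fixed point set $\{x\in X: fx=x\}$. *)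

(* Defs.v *)
From Stdlib Require Import Reals.
From Coquelicot Require Import Coquelicot.
Open Scope R_scope.

Definition Sb_metric_space (X : Type) (S : X -> X -> X -> R) (b : R) : Prop :=
  1 <= b /\
  (forall x y z, 0 <= S x y z) /\
  (forall x y z, S x y z = 0 <-> (x = y /\ y = z)) /\
  (forall x y z a, S x y z <= b * (S x x a + S y y a + S z z a)).

Definition Sb_disc {X : Type} (S : X -> X -> X -> R) (x0 : X) (r : Rbar) : X -> Prop :=
  fun x => Rbar_le (Finite (S x x x0)) r.

Definition fixes_set {X : Type} (f : X -> X) (F : X -> Prop) : Prop :=
  forall x, F x -> f x = x.

(* Jleli-Samet type D_{x0}-S_b-contraction.  phi : (0,oo) -> (1,oo) non-decreasing
   is modelled as a total function R -> R whose behaviour is constrained on (0,oo).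
   The contractive inequality phi(S(x,x,fx)) <= phi(S(x,x,x0))^alpha only makes sense
   when S(x,x,x0) lies in the domain (0,oo) of phi; we require this explicitly. *)
Definition JS_Dx0_Sb_contraction {X : Type} (S : X -> X -> X -> R) (f : X -> X)
  (x0 : X) (alpha : R) (phi : R -> R) : Prop :=
  0 < alpha < 1 /\
  (forall s t, 0 < s -> s <= t -> phi s <= phi t) /\
  (forall s, 0 < s -> 1 < phi s) /\
  (forall x, 0 < S x x (f x) ->
     0 < S x x x0 /\ phi (S x x (f x)) <= Rpower (phi (S x x x0)) alpha).

(* r = inf { S(x,x,fx) | x <> fx }  (= +oo if f has no non-fixed points). *)
Definition r_inf {X : Type} (S : X -> X -> X -> R) (f : X -> X) : Rbar :=
  Glb_Rbar (fun s => exists x, x <> f x /\ s = S x x (f x)).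

(* Main.v *)
Require Import Defs.
From Stdlib Require Import Reals Lra Classical.
From Coquelicot Require Import Coquelicot.
Open Scope R_scope.

Theorem theorem2p5 (X : Type) (S : X -> X -> X -> R) (b : R)
  (HS : Sb_metric_space X S b) (x0 : X) (f : X -> X)
  (alpha : R) (phi : R -> R)
  (Hf : JS_Dx0_Sb_contraction S f x0 alpha phi) :
  fixes_set f (Sb_disc S x0 (r_inf S f)).
Proof.
  destruct HS as [_ [Hnn [Hz _]]].
  destruct Hf as [[Ha0 Ha1] [Hmon [Hgt Hc]]].
  intros x Hx.
  destruct (classic (f x = x)) as [E|NE]; [exact E|exfalso].
  assert (Hs : 0 < S x x (f x)).
  { destruct (Rle_lt_or_eq_dec _ _ (Hnn x x (f x))) as [H|H]; [exact H|].
    symmetry in H. apply Hz in H. destruct H as [_ H]. exfalso; apply NE; auto. }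
  destruct (Hc x Hs) as [Hd Hp].
  assert (Hle : S x x x0 <= S x x (f x)).
  { unfold Sb_disc, r_inf in Hx.
    destruct (Glb_Rbar_correct (fun s => exists x, x <> f x /\ s = S x x (f x))) as [Hlb _].
    assert (H2 := Hlb (S x x (f x)) (ex_intro _ x (conj (fun e => NE (eq_sym e)) eq_refl))).
    exact (Rbar_le_trans (Finite (S x x x0)) _ (Finite (S x x (f x))) Hx H2). }
  assert (H1 := Hgt _ Hd).
  assert (H3 : Rpower (phi (S x x x0)) alpha < phi (S x x x0)).
  { rewrite <- (Rpower_1 (phi (S x x x0))) at 2 by lra.
    apply Rpower_lt; lra. }
  assert (H4 := Hmon _ _ Hd Hle).
  lra.
Qed.
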